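(* Let $\mathsf{S}$ be the $2D\times 2D$ stability matrix of the RPA equation $\mathsf{S}\,\mathbf{x}_\nu=\omega_\nu\mathsf{N}\,\mathbf{x}_\nu$ with norm matrix $\mathsf{N}=\begin{pmatrix} 1&0\\ 0&-1 \end{pmatrix}$, where $\mathsf{S}=\mathsf{S}^\dagger$ and $\mathsf{\Sigma}_x\,\mathsf{S}^\ast\,\mathsf{\Sigma}_x = \mathsf{S}$ with $\mathsf{\Sigma}_x = \begin{pmatrix} 0&1\\1&0 \end{pmatrix}$. If $\mathsf{S}$ is positive-semidefinite, then every solution of the RPA equation is either a physical solution (a real nonzero eigenvalue, appearing in a pair $\pm\omega_\nu$, whose eigenvector is normalizable, i.e. has nonzero norm $\mathbf{x}_\nu^\dagger\mathsf{N}\,\mathbf{x}_\nu$, positive for $\omega_\nu>0$) or a Nambu-Goldstone (NG) mode solution (eigenvalue $\omega_\nu=0$, i.e. $\mathsf{S}\,\mathbf{x}_\nu=\mathbf{0}$); and the dimension of any Jordan block of $\mathsf{N\,S}$ associated with an NG-mode solution does not exceed two.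
   Context: The RPA equation is read as the eigenvalue problem of $\mathsf{N\,S}$. The classification into physical solutions and NG-mode solutions corresponds to Classes (1) and (5), respectively, of the five-class classification of RPA solutions in H. Nakada, PTEP (2016) (Prop. 2 there), based on the so-called UL- and LR-dualities. A Jordan block of $\mathsf{N\,S}$ at eigenvalue $0$ built on $\boldsymbol{\xi}_1=\mathbf{x}_\nu$ satisfies $\mathsf{S}\,\boldsymbol{\xi}_2 = i c_1\,\mathsf{N}\,\mathbf{x}_\nu$ with $c_1\in\mathbf{C}$, $c_1\neq 0$. *)

(* Defs.v *)
From HB Require Import structures.
From mathcomp Require Import all_boot all_order all_algebra.
Set Implicit Arguments. Unset Strict Implicit. Unset Printing Implicit Defensive.
Import Order.TTheory GRing.Theory Num.Theory.
Local Open Scope ring_scope.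

(* Complex scalars: an arbitrary numeric algebraically closed field C
   (e.g. complex numbers); conjugation is Num.conj, written x^*. *)

Section RPA.
Variable C : numClosedFieldType.
Variable D : nat.

Definition adj {m n} (A : 'M[C]_(m, n)) : 'M[C]_(n, m) := (map_mx Num.conj A)^T.

Definition cconj {m n} (A : 'M[C]_(m, n)) : 'M[C]_(m, n) := map_mx Num.conj A.

Definition Nmx : 'M[C]_(D + D) := block_mx 1%:M 0 0 (- 1%:M).

Definition Sigmax : 'M[C]_(D + D) := block_mx 0 1%:M 1%:M 0.

Definition psd (S : 'M[C]_(D + D)) : Prop :=
  forall x : 'cV[C]_(D + D), 0 <= (adj x *m S *m x) 0 0.

Definition rpa_solution (S : 'M[C]_(D + D)) (w : C) (x : 'cV[C]_(D + D)) : Prop :=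
  x != 0 /\ S *m x = w *: (Nmx *m x).

Definition rpa_norm (x : 'cV[C]_(D + D)) : C := (adj x *m Nmx *m x) 0 0.

Definition physical_solution (S : 'M[C]_(D + D)) (w : C) (x : 'cV[C]_(D + D)) : Prop :=
  [/\ w \is Num.real, w != 0,
      exists y, rpa_solution S (- w) y,
      rpa_norm x != 0
    & 0 < w -> 0 < rpa_norm x].

Definition NG_solution (S : 'M[C]_(D + D)) (w : C) (x : 'cV[C]_(D + D)) : Prop :=
  w = 0 /\ S *m x = 0.

Definition jordan_chain {n} (A : 'M[C]_n) (lam : C) (xs : seq 'cV[C]_n) : Prop :=
  match xs with
  | [::] => False
  | x1 :: _ =>
      x1 != 0 /\ (A - lam%:M) *m x1 = 0 /\
      forall i, (i.+1 < size xs)%N ->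
        (A - lam%:M) *m nth 0 xs i.+1 = nth 0 xs i
  end.
End RPA.

(* Main.v *)
Require Import Defs.
From HB Require Import structures.
From mathcomp Require Import all_boot all_order all_algebra.
From mathcomp Require Import ring.
Import Order.TTheory GRing.Theory Num.Theory.
Local Open Scope ring_scope.
Set Implicit Arguments. Unset Strict Implicit.

Section H.
Variable C : numClosedFieldType.
Implicit Types (c : C).

Lemma adjM m n p (A : 'M[C]_(m,n)) (B : 'M[C]_(n,p)) : adj (A *m B) = adj B *m adj A.
Proof. by rewrite /adj map_mxM trmx_mul. Qed.
Lemma adjK m n (A : 'M[C]_(m,n)) : adj (adj A) = A.
Proof. by rewrite /adj map_trmx trmxK map_mxCK. Qed.
Lemma adjB m n (A B : 'M[C]_(m,n)) : adj (A - B) = adj A - adj B.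
Proof. by rewrite /adj map_mxB linearB. Qed.
Lemma adjZ m n c (A : 'M[C]_(m,n)) : adj (c *: A) = c^* *: adj A.
Proof. by rewrite /adj map_mxZ linearZ. Qed.
Lemma adj0 m n : adj (0 : 'M[C]_(m,n)) = 0.
Proof. by rewrite /adj map_mx0 trmx0. Qed.
Lemma adj_entry (M : 'M[C]_1) : (M 0 0)^* = (adj M) 0 0.
Proof. by rewrite /adj !mxE. Qed.

Lemma dot_ge0 n (v : 'cV[C]_n) : 0 <= (adj v *m v) 0 0.
Proof.
rewrite mxE; apply: sumr_ge0 => i _; rewrite /adj !mxE mulrC; exact: mul_conjC_ge0.
Qed.
Lemma dot_eq0 n (v : 'cV[C]_n) : (adj v *m v) 0 0 = 0 -> v = 0.
Proof.
rewrite mxE => /eqP; rewrite psumr_eq0; last first.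
  by move=> i _; rewrite /adj !mxE mulrC; exact: mul_conjC_ge0.
move=> /allP H; apply/matrixP => i j; rewrite (ord1 j) mxE.
have := H i (mem_index_enum _); rewrite /adj !mxE mulrC mul_conjC_eq0.
by move/eqP.
Qed.
Lemma entry_lin (M1 M2 M3 M4 : 'M[C]_1) c1 c2 c3 :
  (M1 - c1 *: M2 - c2 *: M3 + c3 *: M4) 0 0 = M1 0 0 - c1 * M2 0 0 - c2 * M3 0 0 + c3 * M4 0 0.
Proof. by rewrite !mxE. Qed.

Lemma psd_null D (S : 'M[C]_(D + D)) (x : 'cV[C]_(D + D)) :
  adj S = S -> psd S -> (adj x *m S *m x) 0 0 = 0 -> S *m x = 0.
Proof.
move=> hS hp hx.
set v := S *m x.
set a := (adj v *m v) 0 0.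
set b := (adj v *m S *m v) 0 0.
have a0 : 0 <= a by apply: dot_ge0.
have b0 : 0 <= b by apply: hp.
have b1 : 0 < b + 1 by apply: ltr_wpDl b0 ltr01.
set t := a / (b + 1).
have t0 : 0 <= t by rewrite divr_ge0 // ltW.
have ev1 : adj x *m S *m v = adj v *m v by rewrite /v adjM hS mulmxA.
have ev2 : adj v *m S *m x = adj v *m v by rewrite -mulmxA.
have E : adj (x - t *: v) *m S *m (x - t *: v) =
  adj x *m S *m x - t *: (adj x *m S *m v) - t *: (adj v *m S *m x) + (t*t) *: (adj v *m S *m v).
  rewrite adjB adjZ (geC0_conj t0) !mulmxBl !mulmxBr -!scalemxAr -!scalemxAl scalerA.
  by rewrite opprB !addrA addrAC.
have := hp (x - t *: v).
rewrite E ev1 ev2.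
rewrite entry_lin hx -/a -/b.
have bn : b + 1 != 0 by rewrite gt_eqF.
have -> : 0 - t * a - t * a + t * t * b = - (a ^+ 2 * (b + 2%:R) / (b + 1) ^+ 2).
  rewrite /t; field; exact: bn.
rewrite oppr_ge0 => hle.
have hge : 0 <= a ^+ 2 * (b + 2%:R) / (b + 1) ^+ 2.
  apply: divr_ge0; last exact: exprn_ge0 (ltW b1).
  by apply: mulr_ge0; [exact: exprn_ge0 | apply: addr_ge0].
have /eqP := le_anti (andb_true_intro (conj hle hge)).
rewrite mulf_eq0 invr_eq0 expf_eq0 (negPf bn) andbF orbF mulf_eq0 expf_eq0 /=.
have b2 : b + 2%:R != 0 by rewrite gt_eqF // ltr_wpDl.
rewrite (negPf b2) orbF => /eqP ha.
by apply: dot_eq0.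
Qed.
Lemma adjN D : adj (Nmx C D) = Nmx C D.
Proof. by rewrite /adj /Nmx map_block_mx tr_block_mx map_mxN !map_mx1 map_mx0 !trmx0 linearN /= trmx1. Qed.
Lemma cconjN D : cconj (Nmx C D) = Nmx C D.
Proof. by rewrite /cconj /Nmx map_block_mx map_mxN !map_mx1 map_mx0. Qed.
Lemma NN D : Nmx C D *m Nmx C D = 1%:M.
Proof.
rewrite /Nmx mulmx_block !mulmx0 !mul0mx !mulmx1 mulNmx mul1mx !addr0 !add0r opprK.
by rewrite [RHS]scalar_mx_block.
Qed.
Lemma SS D : Sigmax C D *m Sigmax C D = 1%:M.
Proof.
rewrite /Sigmax mulmx_block !mulmx0 !mul0mx !mulmx1 !addr0 !add0r.
by rewrite [RHS]scalar_mx_block.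
Qed.
Lemma SN D : Sigmax C D *m Nmx C D = - (Nmx C D *m Sigmax C D).
Proof.
rewrite /Sigmax /Nmx !mulmx_block ?mulmx0 ?mul0mx ?mulmx1 ?mulmxN ?mulNmx ?mulmx1 ?mul1mx ?addr0 ?add0r.
by rewrite opp_block_mx ?oppr0 ?opprK.
Qed.
Lemma cconjM m n p (A : 'M[C]_(m,n)) (B : 'M[C]_(n,p)) : cconj (A *m B) = cconj A *m cconj B.
Proof. by rewrite /cconj map_mxM. Qed.
Lemma cconjZ m n c (A : 'M[C]_(m,n)) : cconj (c *: A) = c^* *: cconj A.
Proof. by rewrite /cconj map_mxZ. Qed.
Lemma cconjK m n (A : 'M[C]_(m,n)) : cconj (cconj A) = A.
Proof. by rewrite /cconj map_mxCK. Qed.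
End H.

Theorem proposition1 (C : numClosedFieldType) (D : nat) (S : 'M[C]_(D + D)) :
  adj S = S ->
  Sigmax C D *m cconj S *m Sigmax C D = S ->
  psd S ->
  (forall (w : C) (x : 'cV[C]_(D + D)), rpa_solution S w x ->
     physical_solution S w x \/ NG_solution S w x) /\
  (forall xs : seq 'cV[C]_(D + D),
     jordan_chain (Nmx C D *m S) 0 xs -> (size xs <= 2)%N).
Proof.
move=> hS hSig hp; split.
  move=> w x [xn0 hx].
  have hq : (adj x *m S *m x) 0 0 = w * rpa_norm x.
    by rewrite -mulmxA hx -scalemxAr mxE mulmxA.
  have nreal : rpa_norm x \is Num.real.
    by apply/CrealP; rewrite /rpa_norm adj_entry !adjM adjK adjN !mulmxA.
  case: (eqVneq ((adj x *m S *m x) 0 0) 0) => hq0.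
    right; have Sx := psd_null hS hp hq0; split => //.
    move: hx; rewrite Sx => /esym/eqP; rewrite scaler_eq0 => /orP[/eqP //|/eqP hNx].
    case/eqP: xn0; by rewrite -[x]mul1mx -(NN C D) -mulmxA hNx mulmx0.
  left.
  have qpos : 0 < (adj x *m S *m x) 0 0 by rewrite lt_def hq0 hp.
  have nn0 : rpa_norm x != 0.
    by apply: contra hq0; rewrite hq => /eqP ->; rewrite mulr0.
  have wn0 : w != 0 by apply: contra hq0; rewrite hq => /eqP ->; rewrite mul0r.
  have wE : w = (adj x *m S *m x) 0 0 / rpa_norm x by rewrite hq mulfK.
  have wreal : w \is Num.real by rewrite wE; apply: rpredM; [exact: gtr0_real | rewrite rpredV].
  split => //.
  - exists (Sigmax C D *m cconj x); split.
      apply: contra xn0 => /eqP h; apply/eqP.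
      by rewrite -[x]cconjK -[cconj x]mul1mx -(SS C D) -mulmxA h mulmx0 /cconj map_mx0.
    rewrite -{1}hSig -!mulmxA (mulmxA (Sigmax C D) (Sigmax C D)) SS mul1mx.
    rewrite -cconjM hx cconjZ cconjM cconjN (conj_Creal wreal) -scalemxAr [in LHS]mulmxA SN mulNmx scalerN scaleNr.
    by rewrite mulmxA.
  - move=> wpos; have := qpos; rewrite hq.
    by rewrite pmulr_rgt0.
move=> [|x1 [|x2 [|x3 rest]]] //=.
move=> [x1n0 [h1 h2]]; exfalso.
have z0 : (0 : C)%:M = 0 :> 'M[C]_(D + D) by apply/matrixP => i j; rewrite !mxE mul0rn.
rewrite z0 subr0 in h1 h2.
have e2 := h2 0%N isT; have e3 := h2 1%N isT; rewrite /= in e2 e3.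
have Sx1 : S *m x1 = 0.
  by rewrite -[S *m x1]mul1mx -(NN C D) -mulmxA (mulmxA _ S x1) h1 mulmx0.
have q2 : (adj x2 *m S *m x2) 0 0 = 0.
  have -> : adj x2 *m S *m x2 = adj (S *m x1) *m x3.
    by rewrite -e2 -e3 !adjM adjN hS !mulmxA.
  by rewrite Sx1 adj0 mul0mx mxE.
have Sx2 := psd_null hS hp q2.
by move: x1n0; rewrite -e2 -mulmxA Sx2 mulmx0 eqxx.
Qed.
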